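(* Let $(p_\lambda(\mathbf y))_{\lambda\in\mathcal P}$ be a full sequence of symmetric functions of binomial type associated with the quasi-genus $G$. Then for all partitions $\lambda$ and $\mu$, with $r=\ell(\mu)$, $$\mathbf D_\mu\,p_\lambda(\mathbf y)=\sum\frac{\lambda!}{\big(\lambda-\alpha^{(1)}-\cdots-\alpha^{(r)}\big)!\,\alpha^{(1)}!\cdots\alpha^{(r)}!}\,G_{\alpha^{(1)}}\cdots G_{\alpha^{(r)}}\;p_{\lambda-\alpha^{(1)}-\cdots-\alpha^{(r)}}(\mathbf y).$$ The sum runs over all tuples $(\alpha^{(1)},\dots,\alpha^{(r)})$ of vectors in $\mathbb Z_{\ge0}^{\ell(\lambda)}$ such that $|\alpha^{(i)}|=\mu_i$ for each $i$ and $\alpha^{(1)}+\cdots+\alpha^{(r)}\le\lambda$ componentwise.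
   Context: **Derivatives.** $\mathbf D_n$ is the linear operator on symmetric functions with $\mathbf D_nm_\nu=n!\,m_{\nu\setminus n}$ if $n$ is a part of $\nu$ (one part removed), and $0$ otherwise. For a partition $\mu$, $\mathbf D_\mu=\prod_{i=1}^{\ell(\mu)}\mathbf D_{\mu_i}/\mu_i!$. **Full sequence.** Partitions of $n$ are ordered by Macdonald's reverse lexicographic order. A full sequence is a family $(p_\lambda)_{\lambda\in\mathcal P}$ of homogeneous symmetric functions in $\mathbf y=(y_1,y_2,\dots)$ such that the largest partition with nonzero coefficient in the monomial expansion of $p_\lambda$ is $\lambda$. **Vector conventions.** For a finitely supported vector $\alpha$ of nonnegative integers, $p_\alpha$ and $G_\alpha$ mean the value at the sorted partition. We write $\alpha!=\prod\alpha_i!$, $|\alpha|=\sum\alpha_i$, and $\binom{\lambda}{\alpha}=\lambda!/(\alpha!(\lambda-\alpha)!)$. **Binomial type.** $(p_\lambda)$ is of binomial type if $p_\lambda(\mathbf y\cup\mathbf z)=\sum_{0\le\alpha\le\lambda}\binom{\lambda}{\alpha}p_\alpha(\mathbf y)p_{\lambda-\alpha}(\mathbf z)$ for disjoint variable sets. **Quasi-genus.** A quasi-genus is an assignment $\lambda\mapsto G_\lambda\in\mathbb C$ with $G_\emptyset=1$. **Association.** $(p_\lambda)$ is associated with $G$ if $$p_\lambda(\mathbf y)=\sum\frac{\lambda!}{\prod_j\alpha^{(j)}!}\prod_{j\ge1}G_{\alpha^{(j)}}y_j^{|\alpha^{(j)}|},$$ summed over families $(\alpha^{(j)})_{j\ge1}$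 of vectors in $\mathbb Z_{\ge0}^{\ell(\lambda)}$, almost all zero, with $\sum_j\alpha^{(j)}=\lambda$. *)

(* Defs.v *)
From HB Require Import structures.
From mathcomp Require Import all_boot all_order all_algebra.
Set Implicit Arguments. Unset Strict Implicit. Unset Printing Implicit Defensive.
Import Order.TTheory GRing.Theory Num.Theory.
Local Open Scope ring_scope.

Definition is_part (s : seq nat) : bool :=
  sorted geq s && all (fun x => 0 < x)%N s.

Definition sortpart (s : seq nat) : seq nat := sort geq [seq x <- s | (0 < x)%N].

Fixpoint revlex_le (s t : seq nat) : bool :=
  match s, t with
  | [::], _ => true
  | _ :: _, [::] => false
  | x :: s', y :: t' => (x < y)%N || ((x == y) && revlex_le s' t')
  end.

(** A symmetric function f in y = (y_1, y_2, ...) is represented by its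
    coefficients in the monomial basis: f = sum_nu f(nu) m_nu, where nu
    ranges over partitions (values of f at non-partitions are irrelevant).
    Equivalently f(nu) is the coefficient of any monomial y^a with
    sortpart a = nu. *)

Section SymFun.
Variable C : numClosedFieldType.

Definition homogeneous (f : seq nat -> C) : Prop :=
  exists d, forall nu, is_part nu -> f nu != 0 -> sumn nu = d.

Definition full_sequence (p : seq nat -> seq nat -> C) : Prop :=
  forall la, is_part la ->
    [/\ homogeneous (p la), p la la != 0 &
        forall nu, is_part nu -> p la nu != 0 -> revlex_le nu la].

Definition quasi_genus (G : seq nat -> C) : Prop := G [::] = 1.

(** Vectors in Z_{>=0}^{l(la)} with entries at most |la| (a finite box that
    contains every vector occurring in the sums below). *)
Definition box (la : seq nat) := {ffun 'I_(size la) -> 'I_(sumn la).+1}.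
Definition bv (la : seq nat) (a : box la) : 'I_(size la) -> nat := fun i => a i.
Definition lav (la : seq nat) : 'I_(size la) -> nat := fun i => nth 0%N la i.
Arguments lav la i : clear implicits.
Definition vseq (l : nat) (v : 'I_l -> nat) : seq nat := [seq v i | i <- enum 'I_l].
Definition vfact (l : nat) (v : 'I_l -> nat) : nat := (\prod_(i < l) (v i)`!)%N.
Definition vsum (l : nat) (v : 'I_l -> nat) : nat := (\sum_(i < l) v i)%N.
Definition vsub (l : nat) (v w : 'I_l -> nat) : 'I_l -> nat := fun i => (v i - w i)%N.

(** Binomial type, coefficientwise: the coefficient of y^a z^b in
    p_la(y u z) is p_la(sortpart (a ++ b)); that of p_al(y) p_{la-al}(z) is
    p_al(sortpart a) * p_{la-al}(sortpart b). *)
Definition binomial_type (p : seq nat -> seq nat -> C) : Prop :=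
  forall la, is_part la -> forall a b : seq nat,
    p la (sortpart (a ++ b)) =
    \sum_(al : box la | [forall i, (bv al i <= lav la i)%N])
      (vfact (lav la))%:R / ((vfact (bv al))%:R * (vfact (vsub (lav la) (bv al)))%:R)
      * p (sortpart (vseq (bv al))) (sortpart a)
      * p (sortpart (vseq (vsub (lav la) (bv al)))) (sortpart b).

(** Association with G, coefficientwise: the coefficient of y^a
    (a = (a_1,...,a_k) an exponent sequence, y_j^0 for j > k) in the defining
    series is the sum over families (al^(1),...,al^(k)) (al^(j) = 0 for j > k
    is forced) with |al^(j)| = a_j and sum_j al^(j) = la. *)
Definition associated (p : seq nat -> seq nat -> C) (G : seq nat -> C) : Prop :=
  forall la, is_part la -> forall a : seq nat,
    p la (sortpart a) =
    \sum_(F : {ffun 'I_(size a) -> box la} |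
            [forall j, vsum (bv (F j)) == nth 0%N a j] &&
            [forall k, (\sum_(j < size a) bv (F j) k)%N == lav la k])
      (vfact (lav la))%:R / (\prod_(j < size a) (vfact (bv (F j)))%:R)
      * \prod_(j < size a) G (sortpart (vseq (bv (F j)))).

(** Derivative D_n in coefficients: D_n m_nu = n! m_{nu \ n} if n is a part
    of nu, else 0; hence (D_n f)(ka) = n! f(ka u {n}) for n > 0, and D_0 = 0. *)
Definition Dn (n : nat) (f : seq nat -> C) : seq nat -> C :=
  fun ka => if n == 0%N then 0 else (n`!)%:R * f (sortpart (n :: ka)).

Definition Dmu (mu : seq nat) (f : seq nat -> C) : seq nat -> C :=
  foldr (fun n g => fun ka => ((n`!)%:R)^-1 * Dn n g ka) f mu.

End SymFun.
Arguments lav la i : clear implicits.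

(* Main.v *)
Require Import Defs.
From HB Require Import structures.
From mathcomp Require Import all_boot all_order all_algebra.
Set Implicit Arguments. Unset Strict Implicit. Unset Printing Implicit Defensive.
Import Order.TTheory GRing.Theory Num.Theory.

Lemma big_inj_zero (R : Type) (idx : R) (op : Monoid.com_law idx)
  (m l : nat) (s : 'I_m -> 'I_l) (w : 'I_l -> nat) (g : nat -> R) :
  injective s -> g 0%N = idx ->
  (forall k, k \notin [set s i | i in 'I_m] -> w k = 0%N) ->
  \big[op/idx]_(k < l) g (w k) = \big[op/idx]_(i < m) g (w (s i)).
Proof.
move=> inj g0 wz.
rewrite (bigID (fun k => k \in [set s i | i in 'I_m])) /=.
rewrite [X in op _ X]big1 ?Monoid.mulm1; last by move=> k /wz ->.
rewrite big_imset //; by move=> x y _ _; apply: inj.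
Qed.

Lemma sortpart_eq (s t : seq nat) :
  (forall P : pred nat, count (fun x => P x && (0 < x)%N) s = count (fun x => P x && (0 < x)%N) t) ->
  sortpart s = sortpart t.
Proof.
move=> H; rewrite /sortpart; apply/perm_sortP.
- by move=> x y; rewrite /= orbC leq_total.
- by move=> y x z /= h1 h2; exact: leq_trans h2 h1.
- by move=> x y /andP[/= h1 h2]; apply/anti_leq; rewrite h1 h2.
apply/permP => P; rewrite !count_filter; exact: H.
Qed.

Lemma count_vseq (l : nat) (w : 'I_l -> nat) (P : pred nat) :
  count P (vseq w) = (\sum_(i < l) P (w i))%N.
Proof.
rewrite /vseq count_map -sum1_count big_mkcond /= big_enum /=.
by apply: eq_bigr => i _; case: (P (w i)).
Qed.

Lemma sortpart_part (s : seq nat) : is_part s -> sortpart s = s.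
Proof.
case/andP=> so al; rewrite /sortpart; have -> : [seq x <- s | (0 < x)%N] = s by apply/all_filterP.
apply: sorted_sort => //; by move=> y x z /= h1 h2; exact: leq_trans h2 h1.
Qed.

Lemma is_part_sortpart (s : seq nat) : is_part (sortpart s).
Proof.
rewrite /is_part /sortpart sort_sorted /=; last by move=> x y; rewrite /= orbC leq_total.
rewrite all_sort; apply/allP => x; by rewrite mem_filter => /andP[].
Qed.

Lemma count_sortpart (s : seq nat) (P : pred nat) :
  count (fun x => P x && (0 < x)%N) (sortpart s) = count (fun x => P x && (0 < x)%N) s.
Proof.
rewrite /sortpart (permP (permEl (perm_sort _ _))) count_filter.
by apply: eq_count => x /=; case: (P x); case: (0 < x)%N.
Qed.

Lemma sortpart_perm (s t : seq nat) : perm_eq s t -> sortpart s = sortpart t.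
Proof. by move=> pst; apply: sortpart_eq => P; apply/permP. Qed.

Lemma sortpart_cons_sortpart (n : nat) (s : seq nat) :
  sortpart (n :: sortpart s) = sortpart (n :: s).
Proof. by apply: sortpart_eq => P; rewrite /= count_sortpart. Qed.

Lemma Dmu_sortpart (C : numClosedFieldType) (f : seq nat -> C) (mu s : seq nat) :
  all (fun x => 0 < x)%N mu -> Dmu mu f (sortpart s) = f (sortpart (mu ++ s)).
Proof.
elim: mu s => [|n mu IH] s //=.
case/andP=> n0 amu; rewrite /Dn; have -> : (n == 0%N) = false by case: n n0.
rewrite mulrA mulVf ?mul1r ?pnatr_eq0 -?lt0n ?fact_gt0 //.
rewrite sortpart_cons_sortpart IH //; congr f; apply: sortpart_perm.
by rewrite -cat1s -[n :: _]cat1s perm_catCA.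
Qed.

Lemma perm_map_lift (T U : eqType) (f : T -> U) (t : seq U) (s : seq T) :
  perm_eq (map f s) t -> exists s', perm_eq s s' /\ map f s' = t.
Proof.
elim: t s => [|x t IH] s.
  move=> /perm_size; rewrite size_map /=; case: s => // _.
  by exists [::].
move=> pst.
have : x \in map f s by rewrite (perm_mem pst) mem_head.
case/mapP=> y ys ex; subst x.
have pr := perm_to_rem ys.
have : perm_eq (map f (rem y s)) t.
  rewrite -(perm_cons (f y)); apply: perm_trans pst.
  by rewrite perm_sym -[f y :: _]/(map f (y :: rem y s)) perm_map.
case/IH=> s'' [p1 p2]; exists (y :: s''); split; last by rewrite /= p2.
by apply: perm_trans pr _; rewrite perm_cons.
Qed.

Lemma exists_sigma (l : nat) (v : 'I_l -> nat) :
  exists s : 'I_(size (sortpart (vseq v))) -> 'I_l,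
   [/\ injective s, forall i, v (s i) = nth 0%N (sortpart (vseq v)) i &
       forall k, k \notin [set s i | i in 'I_(size (sortpart (vseq v)))] -> v k = 0%N].
Proof.
set nu := sortpart (vseq v).
pose s0 := [seq k <- enum 'I_l | (0 < v k)%N].
have : perm_eq (map v s0) nu.
  by rewrite /nu /sortpart /vseq perm_sym perm_sort filter_map.
case/perm_map_lift=> s' [ps' ms'].
have us' : uniq s' by rewrite -(perm_uniq ps') filter_uniq // enum_uniq.
have sz : size s' == size nu by rewrite -ms' size_map.
pose t := Tuple sz.
exists (tnth t); split.
- by apply/tuple_uniqP.
- move=> i; rewrite (tnth_nth (tnth t i)) /= -(nth_map (tnth t i) 0%N v) ?(eqP sz) ?ltn_ord //.
  by rewrite ms'.
- move=> k kn; apply/eqP; rewrite -leqn0 leqNgt; apply/negP => vk.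
  move/negP: kn; apply.
  have : k \in t by rewrite /= -(perm_mem ps') mem_filter vk mem_enum.
  by case/tnthP=> i ->; apply: imset_f.
Qed.

Lemma sumn_ord (s : seq nat) : sumn s = (\sum_(i < size s) nth 0%N s i)%N.
Proof. by rewrite sumnE (big_nth 0%N) big_mkord. Qed.

Lemma le_sum_ord (n : nat) (f : 'I_n -> nat) (i : 'I_n) : (f i <= \sum_(j < n) f j)%N.
Proof. by rewrite (bigD1 i) //= leq_addr. Qed.

Local Open Scope ring_scope.

Section Core.
Variable C : numClosedFieldType.
Variable p : seq nat -> seq nat -> C.
Variable G : seq nat -> C.
Hypothesis assoc : associated p G.
Variable la : seq nat.
Variable v : 'I_(size la) -> nat.
Hypothesis hv : (vsum v <= sumn la)%N.
Variable a : seq nat.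

Let nu := sortpart (vseq v).
Variable sg : 'I_(size nu) -> 'I_(size la).
Hypothesis sg_inj : injective sg.
Hypothesis sg_val : forall i, v (sg i) = nth 0%N nu i.
Hypothesis sg_out : forall k, k \notin [set sg i | i in 'I_(size nu)] -> v k = 0%N.

Lemma sumn_nu : sumn nu = vsum v.
Proof.
rewrite sumn_ord /vsum (big_inj_zero _ (w := v) (g := fun x => x) sg_inj) //.
by apply: eq_bigr => i _; rewrite sg_val.
Qed.

Lemma vfact_nu : vfact (lav nu) = vfact v.
Proof.
rewrite /vfact (big_inj_zero _ (w := v) (g := factorial) sg_inj) //.
by apply: eq_bigr => i _; rewrite sg_val.
Qed.

Definition ext (w : 'I_(size nu) -> nat) (k : 'I_(size la)) : nat :=
  if [pick i | sg i == k] is Some i then w i else 0%N.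

Lemma ext_sg w i : ext w (sg i) = w i.
Proof.
rewrite /ext; case: pickP => [i' /eqP/sg_inj -> //|/(_ i)]; by rewrite eqxx.
Qed.

Lemma ext_out w k : k \notin [set sg i | i in 'I_(size nu)] -> ext w k = 0%N.
Proof.
move=> kn; rewrite /ext; case: pickP => [i' /eqP ek|//].
by move: kn; rewrite -ek imset_f.
Qed.

Lemma big_ext (R : Type) (idx : R) (op : Monoid.com_law idx) (g : nat -> R) w :
  g 0%N = idx -> \big[op/idx]_(k < size la) g (ext w k) = \big[op/idx]_(i < size nu) g (w i).
Proof.
move=> g0; rewrite (big_inj_zero (w := ext w) _ sg_inj) //; last by move=> k; apply: ext_out.
by apply: eq_bigr => i _; rewrite ext_sg.
Qed.

Definition hF (F' : {ffun 'I_(size a) -> box nu}) : {ffun 'I_(size a) -> box la} :=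
  [ffun j => [ffun k => inord (ext (bv (F' j)) k)]].
Definition hF' (F : {ffun 'I_(size a) -> box la}) : {ffun 'I_(size a) -> box nu} :=
  [ffun j => [ffun i => inord (bv (F j) (sg i))]].

Lemma sumn_le : (sumn nu <= sumn la)%N.
Proof. by rewrite sumn_nu. Qed.

Lemma bv_hF F' j k : bv (hF F' j) k = ext (bv (F' j)) k.
Proof.
rewrite /bv /hF !ffunE inordK //; rewrite /ext; case: pickP => [i _|_ //].
rewrite ltnS; apply: leq_trans sumn_le; rewrite -ltnS; exact: ltn_ord.
Qed.

Lemma hF'K F' : hF' (hF F') = F'.
Proof.
apply/ffunP => j; apply/ffunP => i; apply/val_inj.
have -> : hF' (hF F') j i = inord (bv (hF F' j) (sg i)) by rewrite /hF' !ffunE.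
by rewrite bv_hF ext_sg /bv inord_val.
Qed.

Lemma Y_le (F : {ffun 'I_(size a) -> box la}) :
  [forall k, (\sum_(j < size a) bv (F j) k)%N == v k] -> forall j k, (bv (F j) k <= v k)%N.
Proof.
move=> /forallP H j k; rewrite -(eqP (H k)).
exact: (le_sum_ord (fun j => bv (F j) k)).
Qed.

Lemma hFK (F : {ffun 'I_(size a) -> box la}) :
  [forall k, (\sum_(j < size a) bv (F j) k)%N == v k] -> hF (hF' F) = F.
Proof.
move=> H; have le := Y_le H.
apply/ffunP => j; apply/ffunP => k; apply/val_inj.
rewrite -[val _]/(bv (hF (hF' F) j) k) bv_hF.
case: (boolP (k \in [set sg i | i in 'I_(size nu)])) => [/imsetP[i _ ->]| kn].
  rewrite ext_sg /bv /hF' !ffunE inordK //.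
  rewrite ltnS; apply: leq_trans (le j (sg i)) _; rewrite sg_val sumn_ord.
  exact: (le_sum_ord (fun i => nth 0%N nu i)).
rewrite ext_out //; apply/esym/eqP; rewrite -leqn0 -(sg_out kn); exact: le.
Qed.

Lemma vsum_hF F' j : vsum (bv (hF F' j)) = vsum (bv (F' j)).
Proof.
rewrite /vsum; under eq_bigr do rewrite bv_hF.
exact: (big_ext _ (g := fun x => x)).
Qed.

Lemma vfact_hF F' j : vfact (bv (hF F' j)) = vfact (bv (F' j)).
Proof.
rewrite /vfact; under eq_bigr do rewrite bv_hF.
exact: (big_ext _ (g := factorial)).
Qed.

Lemma sortpart_hF F' j : sortpart (vseq (bv (hF F' j))) = sortpart (vseq (bv (F' j))).
Proof.
apply: sortpart_eq => P; rewrite !count_vseq; under eq_bigr do rewrite bv_hF.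
by apply: (big_ext _ (g := fun x => nat_of_bool (P x && (0 < x)%N))); rewrite andbF.
Qed.

Lemma core_eq :
  p nu (sortpart a) =
  (vfact v)%:R *
  \sum_(F : {ffun 'I_(size a) -> box la} |
          [forall j, vsum (bv (F j)) == nth 0%N a j] &&
          [forall k, (\sum_(j < size a) bv (F j) k)%N == v k])
     ((\prod_(j < size a) (vfact (bv (F j)))%:R)^-1 *
      \prod_(j < size a) G (sortpart (vseq (bv (F j))))).
Proof.
rewrite (assoc (is_part_sortpart _)) mulr_sumr (reindex_onto hF hF') /=; last first.
  by move=> F /andP[_ H]; apply: hFK.
apply: eq_big => [F'|F' _].
  rewrite hF'K eqxx andbT; congr andb.
    by apply: eq_forallb => j; rewrite vsum_hF.
  apply/forallP/forallP => H.
    move=> k; case: (boolP (k \in [set sg i | i in 'I_(size nu)])) => [/imsetP[i _ ->]| kn].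
      under eq_bigr do rewrite bv_hF ext_sg.
      by rewrite sg_val; exact: H.
    under eq_bigr do rewrite bv_hF ext_out //.
    by rewrite big1 // sg_out.
  move=> i; move: (H (sg i)).
  under eq_bigr do rewrite bv_hF ext_sg.
  by rewrite sg_val.
rewrite vfact_nu mulrA; congr (_ / _ * _).
  by apply: eq_bigr => j _; rewrite vfact_hF.
by apply: eq_bigr => j _; rewrite sortpart_hF.
Qed.

End Core.

Lemma core (C : numClosedFieldType) (p : seq nat -> seq nat -> C) (G : seq nat -> C) :
  associated p G -> forall (la : seq nat) (v : 'I_(size la) -> nat),
  (vsum v <= sumn la)%N -> forall a : seq nat,
  p (sortpart (vseq v)) (sortpart a) =
  (vfact v)%:R *
  \sum_(F : {ffun 'I_(size a) -> box la} |
          [forall j, vsum (bv (F j)) == nth 0%N a j] &&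
          [forall k, (\sum_(j < size a) bv (F j) k)%N == v k])
     ((\prod_(j < size a) (vfact (bv (F j)))%:R)^-1 *
      \prod_(j < size a) G (sortpart (vseq (bv (F j))))).
Proof.
move=> assoc la v hv a; have [sg [i1 i2 i3]] := exists_sigma v.
exact: (core_eq assoc hv a i1 i2 i3).
Qed.

Definition join (T : Type) (m n : nat) (A : {ffun 'I_m -> T}) (B : {ffun 'I_n -> T}) :
  {ffun 'I_(m + n) -> T} :=
  [ffun j => match split j with inl i => A i | inr i => B i end].

Lemma join_l (T : Type) m n (A : {ffun 'I_m -> T}) (B : {ffun 'I_n -> T}) i :
  join A B (lshift n i) = A i.
Proof. by rewrite ffunE -[lshift n i]/(unsplit (inl _ i)) unsplitK. Qed.

Lemma join_r (T : Type) m n (A : {ffun 'I_m -> T}) (B : {ffun 'I_n -> T}) i :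
  join A B (rshift m i) = B i.
Proof. by rewrite ffunE -[rshift m i]/(unsplit (inr _ i)) unsplitK. Qed.

Lemma sum_join (R : nmodType) (T : finType) m n (Phi : {ffun 'I_(m + n) -> T} -> R) :
  \sum_F Phi F = \sum_(A : {ffun 'I_m -> T}) \sum_(B : {ffun 'I_n -> T}) Phi (join A B).
Proof.
rewrite pair_big /=.
apply: (reindex (fun AB => join AB.1 AB.2)).
exists (fun F : {ffun 'I_(m + n) -> T} => ([ffun i => F (lshift n i)], [ffun i => F (rshift m i)])).
  move=> [A B] _ /=; congr pair; apply/ffunP => i; by rewrite ffunE ?join_l ?join_r.
move=> F _; apply/ffunP => j; rewrite -(splitK j); case: (split j) => i /=.
  by rewrite join_l ffunE.
by rewrite join_r ffunE.
Qed.

Lemma forall_split m n (P : 'I_(m + n) -> bool) :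
  [forall j, P j] = [forall i, P (lshift n i)] && [forall i, P (rshift m i)].
Proof.
apply/forallP/andP => [H|[/forallP H1 /forallP H2] j].
  by split; apply/forallP => i; apply: H.
by rewrite -(splitK j); case: (split j) => i /=.
Qed.

From mathcomp Require Import zify ring lra.

Lemma vfact_neq0 (C : numClosedFieldType) l (w : 'I_l -> nat) : (vfact w)%:R != 0 :> C.
Proof. by rewrite pnatr_eq0 -lt0n /vfact; apply: prodn_gt0 => i; exact: fact_gt0. Qed.

Lemma vsub_le (la : seq nat) (f : 'I_(size la) -> nat) : (vsum (vsub (lav la) f) <= sumn la)%N.
Proof.
rewrite sumn_ord /vsum /vsub /lav; apply: leq_sum => i _; exact: leq_subr.
Qed.

Theorem mainTheorem15 (C : numClosedFieldType)
  (p : seq nat -> seq nat -> C) (G : seq nat -> C) :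
  quasi_genus G -> full_sequence p -> binomial_type p -> associated p G ->
  forall la mu : seq nat, is_part la -> is_part mu ->
  forall ka : seq nat, is_part ka ->
  Dmu mu (p la) ka =
  \sum_(A : {ffun 'I_(size mu) -> box la} |
          [forall i, vsum (bv (A i)) == nth 0%N mu i] &&
          [forall k, (\sum_(i < size mu) bv (A i) k <= lav la k)%N])
    (vfact (lav la))%:R /
      ((vfact (vsub (lav la) (fun k => \sum_(i < size mu) bv (A i) k)%N))%:R
       * \prod_(i < size mu) (vfact (bv (A i)))%:R)
    * \prod_(i < size mu) G (sortpart (vseq (bv (A i))))
    * p (sortpart (vseq (vsub (lav la) (fun k => \sum_(i < size mu) bv (A i) k)%N))) ka.
Proof.
move=> qg fs bt assoc la mu pla pmu ka pka.
have amu : all (fun x => 0 < x)%N mu by case/andP: pmu.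
rewrite -{1}(sortpart_part pka) Dmu_sortpart // (assoc la pla).
rewrite size_cat.
symmetry. under eq_bigr => A _ do rewrite -[in p _ ka](sortpart_part pka) (core assoc (vsub_le _)). symmetry.

rewrite big_mkcond sum_join [RHS]big_mkcond.
apply: eq_bigr => A _.
have nthl (i : 'I_(size mu)) : nth 0%N (mu ++ ka) (lshift (size ka) i) = nth 0%N mu i.
  by rewrite nth_cat; have -> : (lshift (size ka) i < size mu)%N = true by exact: (ltn_ord i).
have nthr (i : 'I_(size ka)) : nth 0%N (mu ++ ka) (rshift (size mu) i) = nth 0%N ka i.
  rewrite nth_cat; have -> : (rshift (size mu) i < size mu)%N = false by rewrite /= ltnNge leq_addr.
  by rewrite /= addKn.
have sumj (B : {ffun 'I_(size ka) -> box la}) k :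
    (\sum_(j < size mu + size ka) bv (join A B j) k =
     \sum_(i < size mu) bv (A i) k + \sum_(j < size ka) bv (B j) k)%N.
  by rewrite big_split_ord; congr addn; apply: eq_bigr => i _; rewrite ?join_l ?join_r.
have cjoin (B : {ffun 'I_(size ka) -> box la}) :
  [forall j, vsum (bv (join A B j)) == nth 0%N (mu ++ ka) j] &&
  [forall k, (\sum_(j < size mu + size ka) bv (join A B j) k)%N == lav la k] =
  [&& [forall i, vsum (bv (A i)) == nth 0%N mu i],
      [forall j, vsum (bv (B j)) == nth 0%N ka j] &
      [forall k, (\sum_(i < size mu) bv (A i) k + \sum_(j < size ka) bv (B j) k)%N == lav la k]].
  rewrite forall_split.
  under [X in (X && _) && _]eq_forallb => i do rewrite join_l nthl.
  under [X in (_ && X) && _]eq_forallb => i do rewrite join_r nthr.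
  under [X in _ && X]eq_forallb => k do rewrite sumj.
  by rewrite andbA.
have pj (g : box la -> C) (B : {ffun 'I_(size ka) -> box la}) :
    \prod_(j < size mu + size ka) g (join A B j) = \prod_(i < size mu) g (A i) * \prod_(j < size ka) g (B j).
  by rewrite big_split_ord; congr (_ * _); apply: eq_bigr => i _; rewrite ?join_l ?join_r.
case: ifP => [/andP[cA le] | ncA].
  rewrite !mulr_sumr [RHS]big_mkcond; apply: eq_bigr => B _.
  rewrite /= cjoin cA /=.
  have ek : [forall k, (\sum_(i < size mu) bv (A i) k + \sum_(j < size ka) bv (B j) k)%N == lav la k] =
            [forall k, (\sum_(j < size ka) bv (B j) k)%N ==
               vsub (lav la) (fun k => \sum_(i < size mu) bv (A i) k)%N k].
    apply: eq_forallb => k; rewrite /vsub; move/forallP: le => /(_ k).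
    move: (\sum_(i < size mu) bv (A i) k)%N (\sum_(j < size ka) bv (B j) k)%N (lav la k) => x y z hxz.
    by apply/eqP/eqP; lia.
  rewrite ek; case: ifP => // _.
  rewrite (pj (fun x => (vfact (bv x))%:R)) (pj (fun x => G (sortpart (vseq (bv x))))).
  have hw := vfact_neq0 C (vsub (lav la) (fun k => \sum_(i < size mu) bv (A i) k)%N).
  have hA : \prod_(i < size mu) (vfact (bv (A i)))%:R != 0 :> C.
    by apply/prodf_neq0 => i _; exact: vfact_neq0.
  have hB : \prod_(i < size ka) (vfact (bv (B i)))%:R != 0 :> C.
    by apply/prodf_neq0 => i _; exact: vfact_neq0.
  move: hw hA hB.
  move: (vfact (vsub (lav la) (fun k => \sum_(i < size mu) bv (A i) k)%N))%:R => w.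
  move: (\prod_(i < size mu) (vfact (bv (A i)))%:R) => x.
  move: (\prod_(i < size ka) (vfact (bv (B i)))%:R) => y.
  move=> hw hx hy; field.
  by rewrite hw hx hy.
apply: big1 => B _; rewrite /= cjoin; case: ifP => // /and3P[cA _ /forallP H].
exfalso; move: ncA; rewrite cA /=; move/negbT/negP; apply.
by apply/forallP => k; rewrite -(eqP (H k)) leq_addr.
Qed.
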